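(* Let $\pi_1(K^2)=\langle a,b\mid aba^{-1}=b^{-1}\rangle$ and let $\rho\colon\pi_1(K^2)\to\mathrm{Isom}(\mathbb{H}^3)$ preserve the orientation type with $\rho(b)\neq\mathrm{Id}$. Then: if $\rho$ is parabolic, $I_\gamma(\rho)=0$ for all $\gamma\in\langle a^2,b\rangle$; if $\rho$ is of type I, $I_{a^2}(\rho)\ge0$ and $I_b(\rho)<0$; if $\rho$ is of type II, $I_{a^2}(\rho)\le0$ and $I_b(\rho)>0$.
   Context: $\rho$ preserves the orientation type if $\rho(\gamma)$ is orientation-preserving iff $\gamma$ is an orientation-preserving loop of $K^2$ (so $\rho(a)$ reverses and $\rho(b)$ preserves orientation). Such $\rho$ with $\rho(b)\ne\mathrm{Id}$ is conjugate, as transformations $A=\rho(a)$, $B=\rho(b)$ of $\mathbb{C}\cup\{\infty\}$, to one of: parabolic: $A(z)=\overline z+1$ or $A(z)=\overline z$, with $B(z)=z+\tau i$, $\tau>0$; type I: $A(z)=e^{l}\overline z$, $B(z)=e^{\alpha i}z$, $l\ge0$, $\alpha\in(0,\pi]$; type II: $A(z)=e^{\alpha i}/\overline z$, $B(z)=e^{l}z$, $l>0$, $\alpha\in[0,\pi]$. For $\gamma$ in the orientation subgroup $\langle a^2,b\rangle$, $I_\gamma(\rho)=(\mathrm{trace}_{\mathrm{PSL}(2,\mathbb{C})}\rho(\gamma))^2-4$. *)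

(* Defs.v *)
From Stdlib Require Import Reals List.
From Coquelicot Require Import Coquelicot.
Import ListNotations.
Open Scope C_scope.

Record Mat := mkMat { m11 : C; m12 : C; m21 : C; m22 : C }.

Definition mmul (M N : Mat) : Mat :=
  mkMat (m11 M * m11 N + m12 M * m21 N) (m11 M * m12 N + m12 M * m22 N)
        (m21 M * m11 N + m22 M * m21 N) (m21 M * m12 N + m22 M * m22 N).
Definition mconj (M : Mat) : Mat :=
  mkMat (Cconj (m11 M)) (Cconj (m12 M)) (Cconj (m21 M)) (Cconj (m22 M)).
(* adjugate: projectively equal to the inverse *)
Definition madj (M : Mat) : Mat := mkMat (m22 M) (- m12 M) (- m21 M) (m11 M).
Definition mscal (l : C) (M : Mat) : Mat :=
  mkMat (l * m11 M) (l * m12 M) (l * m21 M) (l * m22 M).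
Definition mdet (M : Mat) : C := m11 M * m22 M - m12 M * m21 M.
Definition mtr (M : Mat) : C := m11 M + m22 M.
Definition mid : Mat := mkMat 1 0 0 1.

(** An isometry of H^3, seen as a transformation of C ∪ {∞}:
    [rev = false] : z |-> (m11 z + m12)/(m21 z + m22)   (Möbius, orientation preserving)
    [rev = true ] : z |-> (m11 zbar + m12)/(m21 zbar + m22) (anti-Möbius, reversing).
    The matrix is only meaningful up to a nonzero scalar and must have det <> 0. *)
Record Isom := mkIsom { rev : bool; mat : Mat }.

Definition valid (g : Isom) : Prop := mdet (mat g) <> 0.

Definition cj (e : bool) (M : Mat) : Mat := if e then mconj M else M.

Definition icomp (g h : Isom) : Isom :=
  mkIsom (xorb (rev g) (rev h)) (mmul (mat g) (cj (rev g) (mat h))).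
Definition iinv (g : Isom) : Isom := mkIsom (rev g) (cj (rev g) (madj (mat g))).
Definition iid : Isom := mkIsom false mid.

(* equality as transformations of C ∪ {∞} (matrices up to nonzero scalar) *)
Definition ieq (g h : Isom) : Prop :=
  rev g = rev h /\ exists l : C, l <> 0 /\ mat g = mscal l (mat h).

(** A representation rho : pi_1(K^2) = <a,b | a b a^-1 = b^-1> -> Isom(H^3),
    given (universal property of the presentation) by the images of a and b. *)
Record KRep := mkKRep { rho_a : Isom; rho_b : Isom }.

Definition is_rep (r : KRep) : Prop :=
  valid (rho_a r) /\ valid (rho_b r) /\
  ieq (icomp (icomp (rho_a r) (rho_b r)) (iinv (rho_a r))) (iinv (rho_b r)).

Definition preserves_orientation_type (r : KRep) : Prop :=
  rev (rho_a r) = true /\ rev (rho_b r) = false.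

Inductive letter := La | Lb.
Definition word := list (letter * bool).

Definition eval_letter (r : KRep) (x : letter * bool) : Isom :=
  let g := match fst x with La => rho_a r | Lb => rho_b r end in
  if snd x then iinv g else g.
Fixpoint eval (r : KRep) (w : word) : Isom :=
  match w with
  | [] => iid
  | x :: w' => icomp (eval_letter r x) (eval r w')
  end.

(** Elements of the orientation subgroup <a^2, b>: words in the letters
    a^2 (false) and b (true), each with an inversion flag, expanded into words. *)
Definition osub_word (u : list (bool * bool)) : word :=
  flat_map (fun x : bool * bool => if fst x then ((Lb, snd x) :: nil) else ((La, snd x) :: (La, snd x) :: nil)) u.

(** I(g) = (trace_{PSL(2,C)} g)^2 - 4 = tr(M)^2 / det(M) - 4 for a matrix M of g. *)
Definition Ival (g : Isom) : C := mtr (mat g) * mtr (mat g) / mdet (mat g) - 4.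
Definition I_gamma (r : KRep) (w : word) : C := Ival (eval r w).

Definition word_a2 : word :=  (La, false) :: (La, false) :: nil.
Definition word_b : word :=  (Lb, false) :: nil.

Definition Cge0 (z : C) : Prop := exists x : R, z = RtoC x /\ (0 <= x)%R.
Definition Cle0 (z : C) : Prop := exists x : R, z = RtoC x /\ (x <= 0)%R.
Definition Cgt0 (z : C) : Prop := exists x : R, z = RtoC x /\ (0 < x)%R.
Definition Clt0 (z : C) : Prop := exists x : R, z = RtoC x /\ (x < 0)%R.

Definition cexpi (t : R) : C := (cos t, sin t).

Definition conj_to (r : KRep) (A0 B0 : Isom) : Prop :=
  exists g : Isom, valid g /\
    ieq (rho_a r) (icomp (icomp g A0) (iinv g)) /\
    ieq (rho_b r) (icomp (icomp g B0) (iinv g)).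

(* A(z) = zbar + 1 *)
Definition A_par1 : Isom := mkIsom true (mkMat 1 1 0 1).
(* A(z) = zbar *)
Definition A_par0 : Isom := mkIsom true mid.
(* B(z) = z + tau i *)
Definition B_par (tau : R) : Isom := mkIsom false (mkMat 1 (RtoC tau * Ci) 0 1).

Definition parabolic (r : KRep) : Prop :=
  exists tau : R, (0 < tau)%R /\
    (conj_to r A_par1 (B_par tau) \/ conj_to r A_par0 (B_par tau)).

(* type I: A(z) = e^l zbar, B(z) = e^{alpha i} z, l >= 0, alpha in (0, pi] *)
Definition typeI (r : KRep) : Prop :=
  exists l alpha : R, (0 <= l)%R /\ (0 < alpha <= PI)%R /\
    conj_to r (mkIsom true (mkMat (RtoC (exp l)) 0 0 1))
              (mkIsom false (mkMat (cexpi alpha) 0 0 1)).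

(* type II: A(z) = e^{alpha i} / zbar, B(z) = e^l z, l > 0, alpha in [0, pi] *)
Definition typeII (r : KRep) : Prop :=
  exists l alpha : R, (0 < l)%R /\ (0 <= alpha <= PI)%R /\
    conj_to r (mkIsom true (mkMat 0 (cexpi alpha) 1 0))
              (mkIsom false (mkMat (RtoC (exp l)) 0 0 1)).

(* Main.v *)
Require Import Defs.
From Stdlib Require Import Reals List Lra Psatz.
From Coquelicot Require Import Coquelicot.
Import ListNotations.
Set Bullet Behavior "Strict Subproofs".
Open Scope C_scope.

Lemma Cconj_R (x : R) : Cconj (RtoC x) = RtoC x.
Proof. unfold Cconj, RtoC; simpl; f_equal; ring. Qed.
Lemma Cconj_Ci : Cconj Ci = - Ci.
Proof. unfold Cconj, Ci, Copp; simpl; f_equal; ring. Qed.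

Ltac cpush := repeat progress rewrite ?Cmult_conj, ?Cplus_conj, ?Cminus_conj,
  ?Copp_conj, ?Cconj_conj, ?Cconj_R, ?Cconj_Ci.
Ltac mnorm := unfold cj in *; cbv beta iota in *; unfold mmul, mscal, madj, mconj, mid, mdet, mtr in *; cbn [m11 m12 m21 m22] in *.
Ltac mring := mnorm; f_equal; cpush; ring.

Lemma Cneq0 (z : C) : (fst z * fst z + snd z * snd z <> 0)%R -> z <> 0.
Proof. intros H E; subst; apply H; simpl; ring. Qed.

Lemma Cconj_neq0 (z : C) : z <> 0 -> Cconj z <> 0.
Proof. intros H E; apply H.
  assert (E1 := f_equal fst E); assert (E2 := f_equal snd E); simpl in E1, E2.
  apply injective_projections; simpl; lra. Qed.


Lemma Cinv_nz (z : C) : z <> 0 -> / z <> 0.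
Proof.
  intros H E. assert (H1 := Cinv_r z H). rewrite E in H1.
  replace (z * 0) with (RtoC 0) in H1 by ring.
  assert (H2 := f_equal fst H1). simpl in H2. lra.
Qed.

Lemma mconj_invol (M : Mat) : mconj (mconj M) = M.
Proof. destruct M; mring. Qed.

Lemma Ival_eq (b : bool) (M : Mat) (x : R) :
  mdet M <> 0 -> RtoC x * mdet M = mtr M * mtr M - 4 * mdet M ->
  Ival (mkIsom b M) = RtoC x.
Proof.
  intros Hd H; unfold Ival; simpl.
  replace (RtoC x) with ((mtr M * mtr M - 4 * mdet M) / mdet M).
  - field; auto.
  - rewrite <- H; field; auto.
Qed.

Lemma Cinv0 : / (RtoC 0) = RtoC 0.
Proof. unfold Cinv, RtoC; cbn [fst snd]; apply injective_projections; cbn [fst snd]; unfold Rdiv; ring. Qed.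

Lemma ival_conj (b : bool) (k : C) (G U : Mat) :
  k <> 0 -> mdet G <> 0 ->
  Ival (mkIsom b (mscal k (mmul (mmul G U) (madj G)))) = Ival (mkIsom b U).
Proof.
  intros Hk Hg; unfold Ival; simpl.
  assert (T : mtr (mscal k (mmul (mmul G U) (madj G))) = k * mdet G * mtr U)
    by (destruct G, U; mnorm; ring).
  assert (D : mdet (mscal k (mmul (mmul G U) (madj G))) = (k * mdet G) * (k * mdet G) * mdet U)
    by (destruct G, U; mnorm; ring).
  rewrite T, D. destruct (Classical_Prop.classic (mdet U = 0)) as [Hu|Hu].
  - rewrite Hu. replace ((k * mdet G) * (k * mdet G) * 0) with (RtoC 0) by ring.
    unfold Cdiv. rewrite Cinv0. ring.
  - field; repeat split; auto.
Qed.

Definition good (G M : Mat) : Prop :=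
  exists u v : C, u <> 0 /\ mmul M G = mmul G (mkMat u v 0 u).

Lemma good_mul (G X Y : Mat) : good G X -> good G Y -> good G (mmul X Y).
Proof.
  intros (u1 & v1 & H1 & E1) (u2 & v2 & H2 & E2).
  exists (u1 * u2), (u1 * v2 + v1 * u2); split; [apply Cmult_neq_0; auto|].
  transitivity (mmul X (mmul Y G)); [destruct X, Y, G; mring|].
  rewrite E2.
  transitivity (mmul (mmul X G) (mkMat u2 v2 0 u2)); [destruct X, G; mring|].
  rewrite E1. destruct G; mring.
Qed.

Lemma good_conj (G : Mat) (k : C) (U : Mat) : k <> 0 -> mdet G <> 0 -> m21 U = 0 -> m11 U = m22 U -> m11 U <> 0 ->
  good G (mscal k (mmul (mmul G U) (madj G))).
Proof.
  intros Hk Hd H21 H22 H11. destruct U as [u v w z]; simpl in *; subst.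
  exists (k * mdet G * z), (k * mdet G * v); split.
  - repeat apply Cmult_neq_0; auto.
  - destruct G; mring.
Qed.

Lemma good_ival (G M : Mat) (b : bool) : mdet G <> 0 -> good G M -> Ival (mkIsom b M) = RtoC 0.
Proof.
  intros Hd (u & v & Hu & E).
  assert (EM : M = mscal (/ mdet G) (mmul (mmul G (mkMat u v 0 u)) (madj G))).
  { rewrite <- E. destruct M, G; mnorm; f_equal; field; auto. }
  rewrite EM, ival_conj; auto.
  - unfold Ival, mtr, mdet; cbn [mat m11 m12 m21 m22].
    replace (u * u - v * 0) with (u * u) by ring. field; auto.
  - apply Cinv_nz; auto.
Qed.

Lemma sq_form (l : C) (G A : Mat) :
  mmul (mscal l (mmul (mmul G A) (mconj (madj G))))
       (mconj (mscal l (mmul (mmul G A) (mconj (madj G))))) =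
  mscal (l * Cconj l * Cconj (mdet G)) (mmul (mmul G (mmul A (mconj A))) (madj G)).
Proof. destruct G, A; mring. Qed.

Lemma inv_form (l : C) (G A : Mat) :
  mconj (madj (mscal l (mmul (mmul G A) (mconj (madj G))))) =
  mscal (Cconj l) (mmul (mmul G (mconj (madj A))) (mconj (madj G))).
Proof. destruct G, A; mring. Qed.

Lemma adj_form (l : C) (G B : Mat) :
  madj (mscal l (mmul (mmul G B) (madj G))) = mscal l (mmul (mmul G (madj B)) (madj G)).
Proof. destruct G, B; mring. Qed.

Lemma a2_mat (X R : Mat) : mmul X (mconj (mmul X (mconj R))) = mmul (mmul X (mconj X)) R.
Proof. destruct X, R; mring. Qed.

Lemma mmul_mid (X : Mat) : mmul X mid = X.
Proof. destruct X; mring. Qed.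

Lemma conj_to_form (r : KRep) (A0 B0 : Isom) : Defs.rev A0 = true -> Defs.rev B0 = false -> conj_to r A0 B0 ->
  exists (rg : bool) (G : Mat) (l1 l2 : C), mdet G <> 0 /\ l1 <> 0 /\ l2 <> 0 /\
    mat (rho_a r) = mscal l1 (mmul (mmul G (cj rg (mat A0))) (mconj (madj G))) /\
    mat (rho_b r) = mscal l2 (mmul (mmul G (cj rg (mat B0))) (madj G)).
Proof.
  intros HA HB [[rg G] [Hv [[_ [l1 [H1 EA]]] [_ [l2 [H2 EB]]]]]].
  exists rg, G, l1, l2; repeat split; auto.
  - rewrite EA. destruct A0 as [ra A]; simpl in *; subst ra. destruct rg; reflexivity.
  - rewrite EB. destruct B0 as [rb B]; simpl in *; subst rb. destruct rg; simpl;
      rewrite ?mconj_invol; reflexivity.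
Qed.

Ltac creal := unfold cj; cbv beta iota; unfold mmul, mscal, madj, mconj, mid, mdet, mtr, cexpi,
  Cconj, Cminus, Cmult, Cplus, Copp, RtoC, Ci; cbn [m11 m12 m21 m22 fst snd].

Lemma par_case (Ma Mb G : Mat) : mdet G <> 0 -> good G Mb -> good G (madj Mb) ->
  good G (mmul Ma (mconj Ma)) ->
  good G (mmul (mconj (madj Ma)) (mconj (mconj (madj Ma)))) ->
  forall u, Defs.rev (eval (mkKRep (mkIsom true Ma) (mkIsom false Mb)) (osub_word u)) = false /\
    good G (mat (eval (mkKRep (mkIsom true Ma) (mkIsom false Mb)) (osub_word u))).
Proof.
  intros Hd g1 g2 g3 g4 u. induction u as [|[x s] u IH].
  - simpl; split; auto. exists 1, 0; split.
    + intro E. assert (E1 := f_equal fst E). simpl in E1. lra.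
    + destruct G; mring.
  - change (osub_word ((x,s)::u)) with
      ((if x then [(Lb,s)] else [(La,s);(La,s)]) ++ osub_word u).
    destruct IH as [Hr Hg].
    destruct x, s; simpl; rewrite Hr; simpl; split; auto.
    + apply good_mul; auto.
    + apply good_mul; auto.
    + rewrite a2_mat. apply good_mul; auto.
    + rewrite a2_mat. apply good_mul; auto.
Qed.

Lemma one_nz (z : C) : z = 1 -> z <> 0.
Proof. intros -> E. assert (E1 := f_equal fst E). simpl in E1. lra. Qed.

Lemma kA_nz (l d : C) : l <> 0 -> d <> 0 -> l * Cconj l * Cconj d <> 0.
Proof. intros; repeat apply Cmult_neq_0; auto; apply Cconj_neq0; auto. Qed.

Lemma tI_b (rg : bool) (al : R) : (0 < al <= PI)%R ->
  Clt0 (Ival (mkIsom false (cj rg (mkMat (cexpi al) 0 0 1)))).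
Proof.
  intros Hal. pose proof (sin2_cos2 al) as SC; unfold Rsqr in SC.
  exists (2 * cos al - 2)%R; split.
  - apply Ival_eq.
    + apply Cneq0; destruct rg; creal; let HH := fresh in intro HH; ring_simplify in HH; nra.
    + destruct rg; creal; apply injective_projections; cbn [fst snd]; ring_simplify; nra.
  - assert (cos al < 1)%R by (rewrite <- cos_0; apply cos_decreasing_1; pose proof PI_RGT_0; lra). lra.
Qed.

Lemma tI_a2 (rg : bool) (l : R) :
  Cge0 (Ival (mkIsom false (mmul (cj rg (mkMat (exp l) 0 0 1)) (mconj (cj rg (mkMat (exp l) 0 0 1)))))).
Proof.
  pose proof (exp_pos l) as EP.
  assert (Em : mmul (cj rg (mkMat (exp l) 0 0 1)) (mconj (cj rg (mkMat (exp l) 0 0 1))) =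
     mkMat (RtoC (exp l) * RtoC (exp l)) 0 0 1) by (destruct rg; mring).
  rewrite Em; clear Em.
  set (E := exp l) in *.
  exists (((E * E - 1) / E) * ((E * E - 1) / E))%R; split.
  - apply Ival_eq.
    + apply Cneq0; creal; let HH := fresh in intro HH; ring_simplify in HH;
        assert (0 < E ^ 4)%R by (apply pow_lt; lra); lra.
    + creal; apply injective_projections; cbn [fst snd]; field; lra.
  - apply Rle_0_sqr.
Qed.

Lemma tII_b (rg : bool) (l : R) : (0 < l)%R ->
  Cgt0 (Ival (mkIsom false (cj rg (mkMat (exp l) 0 0 1)))).
Proof.
  intros Hl. pose proof (exp_pos l) as EP.
  assert (E1 : (1 < exp l)%R) by (rewrite <- exp_0; apply exp_increasing; lra).
  assert (Em : cj rg (mkMat (exp l) 0 0 1) = mkMat (exp l) 0 0 1) by (destruct rg; mring).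
  rewrite Em; clear Em.
  set (E := exp l) in *.
  exists ((E - 1) * (E - 1) / E)%R; split.
  - apply Ival_eq.
    + apply Cneq0; creal; nra.
    + creal; apply injective_projections; cbn [fst snd]; field; lra.
  - apply Rdiv_lt_0_compat; nra.
Qed.

Lemma tII_a2 (rg : bool) (al : R) :
  Cle0 (Ival (mkIsom false (mmul (cj rg (mkMat 0 (cexpi al) 1 0)) (mconj (cj rg (mkMat 0 (cexpi al) 1 0)))))).
Proof.
  pose proof (sin2_cos2 al) as SC; unfold Rsqr in SC.
  assert (S2 : (sin al ^ 2 = 1 - cos al ^ 2)%R) by (simpl; lra).
  assert (Em : mmul (cj rg (mkMat 0 (cexpi al) 1 0)) (mconj (cj rg (mkMat 0 (cexpi al) 1 0))) =
     mkMat (if rg then Cconj (cexpi al) else cexpi al) 0 0 (if rg then cexpi al else Cconj (cexpi al)))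
    by (destruct rg; mring).
  rewrite Em; clear Em.
  exists (4 * cos al * cos al - 4)%R; split.
  - apply Ival_eq.
    + apply Cneq0; destruct rg; creal; let HH := fresh in intro HH; ring_simplify in HH;
      replace (sin al ^ 4)%R with ((sin al ^ 2) ^ 2)%R in HH by ring; rewrite S2 in HH;
      ring_simplify in HH; lra.
    + destruct rg; creal; apply injective_projections; cbn [fst snd]; ring_simplify; try rewrite S2; ring.
  - nra.
Qed.

Theorem lemma4p5 (r : KRep) :
  is_rep r -> preserves_orientation_type r -> ~ ieq (rho_b r) iid ->
  (parabolic r -> forall u : list (bool * bool), I_gamma r (osub_word u) = RtoC 0) /\
  (typeI r -> Cge0 (I_gamma r word_a2) /\ Clt0 (I_gamma r word_b)) /\
  (typeII r -> Cle0 (I_gamma r word_a2) /\ Cgt0 (I_gamma r word_b)).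
Proof.
  intros _ [Ha Hb] _.
  destruct r as [[ra Ma] [rb Mb]]; simpl in Ha, Hb; subst ra rb.
  split; [|split].
  - intros [tau [Htau Hc]] u.
    assert (key : forall s : C, Cconj s = s ->
      conj_to (mkKRep (mkIsom true Ma) (mkIsom false Mb)) (mkIsom true (mkMat 1 s 0 1)) (B_par tau) ->
      I_gamma (mkKRep (mkIsom true Ma) (mkIsom false Mb)) (osub_word u) = RtoC 0).
    { intros s Hs Hc'.
      destruct (conj_to_form _ (mkIsom true (mkMat 1 s 0 1)) (B_par tau) eq_refl eq_refl Hc') as (rg & G & l1 & l2 & Hd & H1 & H2 & EA & EB).
      simpl in EA, EB. unfold I_gamma.
      assert (g1 : good G Mb).
      { rewrite EB. apply good_conj; auto; [ | | apply one_nz]; destruct rg; mnorm; cpush; rewrite ?Hs; ring. }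
      assert (g2 : good G (madj Mb)).
      { rewrite EB, adj_form. apply good_conj; auto; [ | | apply one_nz]; destruct rg; mnorm; cpush; rewrite ?Hs; ring. }
      assert (g3 : good G (mmul Ma (mconj Ma))).
      { rewrite EA, sq_form. apply good_conj; auto; [apply kA_nz; auto | | | apply one_nz];
          destruct rg; mnorm; cpush; rewrite ?Hs; ring. }
      assert (g4 : good G (mmul (mconj (madj Ma)) (mconj (mconj (madj Ma))))).
      { rewrite EA, inv_form, sq_form. apply good_conj; auto; [apply kA_nz; auto; apply Cconj_neq0; auto | | | apply one_nz];
          destruct rg; mnorm; cpush; rewrite ?Hs; ring. }
      destruct (par_case Ma Mb G Hd g1 g2 g3 g4 u) as [_ Hg].
      revert Hg. generalize (eval (mkKRep (mkIsom true Ma) (mkIsom false Mb)) (osub_word u)).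
      intros [rr MM] Hg; simpl in Hg. apply good_ival with G; eauto. }
    destruct Hc as [Hc|Hc]; [apply (key 1) | apply (key 0)]; auto; apply Cconj_R.
  - intros [l [al [Hl [Hal Hc]]]].
    destruct (conj_to_form _ (mkIsom true (mkMat (RtoC (exp l)) 0 0 1)) (mkIsom false (mkMat (cexpi al) 0 0 1)) eq_refl eq_refl Hc)
      as (rg & G & l1 & l2 & Hd & H1 & H2 & EA & EB).
    simpl in EA, EB. unfold I_gamma, word_a2, word_b.
    cbn [eval eval_letter icomp iinv fst snd mat Defs.rev xorb cj iid rho_a rho_b]. rewrite EA, EB.
    unfold icomp, iid; cbn [mat Defs.rev xorb cj].
    rewrite a2_mat, !mmul_mid, sq_form, !ival_conj; auto; try (apply kA_nz; auto).
    split; [apply tI_a2 | apply tI_b; auto].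
  - intros [l [al [Hl [Hal Hc]]]].
    destruct (conj_to_form _ (mkIsom true (mkMat 0 (cexpi al) 1 0)) (mkIsom false (mkMat (RtoC (exp l)) 0 0 1)) eq_refl eq_refl Hc)
      as (rg & G & l1 & l2 & Hd & H1 & H2 & EA & EB).
    simpl in EA, EB. unfold I_gamma, word_a2, word_b.
    cbn [eval eval_letter icomp iinv fst snd mat Defs.rev xorb cj iid rho_a rho_b]. rewrite EA, EB.
    unfold icomp, iid; cbn [mat Defs.rev xorb cj].
    rewrite a2_mat, !mmul_mid, sq_form, !ival_conj; auto; try (apply kA_nz; auto).
    split; [apply tII_a2 | apply tII_b; auto].
Qed.
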